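(* For every set $S$ of $\omega$-sharing groups and every idempotent substitution $\theta$, and for every order in which the bindings of $\theta$ are processed in the definition of $\mathrm{mgu}_\omega$, we have $\mathrm{mgu}_\omega(S,\theta)=\mathrm{mgu_p}(S,\theta)$. In other words, sequential (one binding at a time) abstract unification coincides with parallel abstract unification.
   Context: Fix a first-order signature and a denumerable set of variables $\mathcal V$. For a term $t$ and variable $v$, $\mathit{occ}(v,t)$ is the number of occurrences of $v$ in $t$. An $\omega$-sharing group is a multiset of variables with finite support, i.e. a function $B:\mathcal V\to\mathbb N$ that is nonzero on only finitely many variables; $\{\!\!\{\}\!\!\}$ is the empty multiset, and the sum of multisets is $(A\uplus B)(v)=A(v)+B(v)$. The multiplicity of an $\omega$-sharing group $B$ in a term $t$ is $\chi(B,t)=\sum_{v} B(v)\cdot\mathit{occ}(v,t)$. A multigraph $G=\langle N_G,E_G,\mathrm{src}_G,\mathrm{tgt}_G\rangle$ consists of a nonempty set of nodes $N_G$, a set of edges $E_G$, and functions $\mathrm{src}_G,\mathrm{tgt}_G:E_G\to N_G$ (multiple distinct edges, including self-loops, may join the same nodes). The out-degree (in-degree) of $n$ is the number of edges $e$ with $\mathrm{src}_G(e)=n$ (resp. $\mathrm{tgt}_G(e)=n$). A path between $n_1$ and $n_k$ is a nonempty sequence of nodes $n_1\dots n_k$ such that consecutive nodes are joined by an edge in either direction; $G$ is connected if every pair of nodes is joined by a path. A (parallel) sharing graph for a set $S$ of $\omega$-sharing groups and an idempotent substitution $\theta=\{x_1/t_1,\dots,x_p/t_p\}$ (with $p\ge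 0$) is a family $\mathcal G=\{G^i\}_{i\in[1,p]}$ of multigraphs over a common node set $N_{\mathcal G}$, with a labeling $l_{\mathcal G}:N_{\mathcal G}\to S$, such that: (i) for every node $n$ and every $i$, the out-degree of $n$ in $G^i$ equals $\chi(l_{\mathcal G}(n),x_i)$ and the in-degree of $n$ in $G^i$ equals $\chi(l_{\mathcal G}(n),t_i)$; (ii) the edge sets $E_{G^i}$ are pairwise disjoint; (iii) the flattening of $\mathcal G$, i.e. the multigraph with nodes $N_{\mathcal G}$, edges $\bigcup_i E_{G^i}$ and source/target inherited from the layers, is connected. The resultant $\omega$-sharing group is $\mathit{res}(\mathcal G)=\biguplus_{n\in N_{\mathcal G}} l_{\mathcal G}(n)$. The parallel abstract unification is $\mathrm{mgu_p}(S,\theta)=\{\mathit{res}(\mathcal G)\mid \mathcal G \text{ a sharing graph for } S \text{ and } \theta\}$. The sequential abstract unification $\mathrm{mgu}_\omega$ is defined recursively by $\mathrm{mgu}_\omega(S,\epsilon)=S$ (with $\epsilon$ the empty substitution) and $\mathrm{mgu}_\omega(S,\{x/t\}\cup\theta)=\mathrm{mgu}_\omega(\mathrm{mgu_p}(S,\{x/t\}),\theta)$, where $\{x/t\}\cup\theta$ is idempotent and $x\notin\mathrm{dom}(\theta)$. *)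

(* Defs.v *)
From Stdlib Require Import Relations.
From mathcomp Require Import all_boot.
Set Implicit Arguments. Unset Strict Implicit. Unset Printing Implicit Defensive.

Inductive term (F : Type) : Type :=
| Var of nat
| Fn of F & seq (term F).
Arguments Var {F} _.

Section Terms.
Variables (F : Type) (ar : F -> nat).

Fixpoint wf_term (t : term F) : bool :=
  match t with
  | Var _ => true
  | Fn f ts => (size ts == ar f) && all wf_term ts
  end.

Fixpoint occ (v : nat) (t : term F) : nat :=
  match t with
  | Var w => (w == v : nat)
  | Fn _ ts => sumn (map (occ v) ts)
  end.

Fixpoint vbound (t : term F) : nat :=
  match t with
  | Var w => w.+1
  | Fn _ ts => foldr maxn 0 (map vbound ts)
  end.
End Terms.

(* omega-sharing groups: multisets of variables, i.e. functions nat -> nat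
   with finite support. Sets of them are predicates. *)
Definition osg := nat -> nat.
Definition fin_supp (B : osg) : Prop := exists m, forall v, m <= v -> B v = 0.

(* chi(B,t) = sum_v B(v) * occ(v,t); terms with v >= vbound t vanish. *)
Definition chi (F : Type) (B : osg) (t : term F) : nat :=
  \sum_(v < vbound t) B v * occ v t.

(* substitutions as lists of bindings x/t (the list order is a processing order) *)
Definition subst (F : Type) := seq (nat * term F).

Definition bvar (F : Type) (th : subst F) (i : nat) : nat := (nth (0, Var 0) th i).1.
Definition bterm (F : Type) (th : subst F) (i : nat) : term F := (nth (0, Var 0) th i).2.

Definition idempotent_subst (F : Type) (th : subst F) : Prop :=
  uniq (map fst th) /\
  forall i j, i < size th -> j < size th -> occ (bvar th i) (bterm th j) = 0.

(* A (parallel) sharing graph for S and th with nodes 'I_n (a nonempty finite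
   node set), labeling l, and layers E i (i < p), each a finite list of edges
   (src, tgt); distinct list positions are distinct edges, and edges of
   different layers are distinct by construction (pairwise disjoint). *)
Definition sharing_graph (F : Type) (S : osg -> Prop) (th : subst F)
    (n : nat) (l : 'I_n -> osg) (E : 'I_(size th) -> seq ('I_n * 'I_n)) : Prop :=
  [/\ 0 < n,
      (forall k, S (l k)),
      (forall (i : 'I_(size th)) (k : 'I_n),
          count (fun e => e.1 == k) (E i) = chi (l k) (Var (bvar th i) : term F) /\
          count (fun e => e.2 == k) (E i) = chi (l k) (bterm th i)) &
      (forall a b : 'I_n,
          clos_refl_trans 'I_n
            (fun x y => exists i : 'I_(size th), ((x, y) \in E i) || ((y, x) \in E i))
            a b)].

Definition res (n : nat) (l : 'I_n -> osg) : osg := fun v => \sum_(k < n) l k v.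

Definition mgu_p (F : Type) (S : osg -> Prop) (th : subst F) : osg -> Prop :=
  fun B => exists n (l : 'I_n -> osg) (E : 'I_(size th) -> seq ('I_n * 'I_n)),
      @sharing_graph F S th n l E /\ B = @res n l.

Fixpoint mgu_omega (F : Type) (S : osg -> Prop) (th : subst F) : osg -> Prop :=
  match th with
  | [::] => S
  | b :: th' => mgu_omega (mgu_p S [:: b]) th'
  end.

(* Main.v *)
Require Import Defs.
From Stdlib Require Import Relations ClassicalEpsilon FunctionalExtensionality.
From mathcomp Require Import all_boot.
Set Implicit Arguments. Unset Strict Implicit. Unset Printing Implicit Defensive.

Lemma chi_var F (B : osg) x : chi B (Var x : term F) = B x.
Proof.
rewrite /chi /= big_ord_recr /= eqxx muln1 big1 // => i _.
by rewrite eq_sym (ltn_eqF (ltn_ord i)) muln0.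
Qed.

Lemma chi_sum F (I : finType) (P : pred I) (f : I -> osg) (t : term F) :
  chi (fun v => \sum_(k | P k) f k v) t = \sum_(k | P k) chi (f k) t.
Proof.
rewrite /chi; transitivity (\sum_(v < vbound t) \sum_(k | P k) f k v * occ v t).
  by apply: eq_bigr => v _; rewrite big_distrl.
exact: exchange_big.
Qed.

Lemma crt_map (A B : Type) (f : A -> B) (R : relation A) (R' : relation B) a b :
  (forall x y, R x y -> clos_refl_trans B R' (f x) (f y)) ->
  clos_refl_trans A R a b -> clos_refl_trans B R' (f a) (f b).
Proof.
move=> H; elim=> [x y /H //| x | x y z _ IH1 _ IH2]; first exact: rt_refl.
exact: rt_trans IH1 IH2.
Qed.

Definition sgf F (S : osg -> Prop) (th : subst F) (T : finType) (l : T -> osg)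
  (E : 'I_(size th) -> seq (T * T)) : Prop :=
  [/\ 0 < #|T|, (forall k, S (l k)),
      (forall (i : 'I_(size th)) (k : T),
          count (fun e => e.1 == k) (E i) = chi (l k) (Var (bvar th i) : term F) /\
          count (fun e => e.2 == k) (E i) = chi (l k) (bterm th i)) &
      (forall a b : T,
          clos_refl_trans T
            (fun x y => exists i : 'I_(size th), ((x, y) \in E i) || ((y, x) \in E i))
            a b)].

Arguments sgf [F] S th [T] l E.

Lemma mgu_p_fin F S (th : subst F) B :
  mgu_p S th B <-> exists (T : finType) (l : T -> osg) E,
     @sgf F S th T l E /\ B = (fun v => \sum_(k : T) l k v).
Proof.
split.
  case=> n [l [E [[n0 Sl Hd Hc] ->]]]; exists 'I_n, l, E; split=> //.
  by split=> //; rewrite card_ord.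
case=> T [l [E [[n0 Sl Hd Hc] ->]]].
pose f (e : T * T) := (enum_rank e.1, enum_rank e.2).
exists #|T|, (fun k => l (enum_val k)), (fun i => map f (E i)); split; last first.
  rewrite /res; apply: functional_extensionality => v.
  by rewrite (big_enum_val (fun x => l x v)).
split=> //.
- move=> i k; have [H1 H2] := Hd i (enum_val k).
  rewrite !count_map -H1 -H2; split; apply: eq_count => e /=;
    by apply/eqP/eqP => [<-|->]; rewrite ?enum_rankK ?enum_valK.
- move=> a b; rewrite -(enum_valK a) -(enum_valK b); apply: crt_map (Hc _ _).
  move=> x y [i Hi]; apply: rt_step; exists i.
  by case/orP: Hi => H; rewrite (map_f f H) ?orbT.
Qed.

Lemma count_pmap (A B : Type) (g : A -> option B) (p : pred B) s :
  count p (pmap g s) = count (fun x => oapp p false (g x)) s.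
Proof. by elim: s => //= x s IH; case: (g x) => [y|] /=; rewrite IH. Qed.

Lemma count_part (A : Type) (T : finType) (f : A -> T) (P : pred T) s :
  count (fun a => P (f a)) s = \sum_(x | P x) count (fun a => f a == x) s.
Proof.
elim: s => [|a s IH] /=; first by rewrite big1.
rewrite IH big_split /=; congr (_ + _).
case Pa: (P (f a)).
  rewrite (bigD1 (f a)) //= eqxx big1 // => x /andP[_ /negPf]; by rewrite eq_sym => ->.
by rewrite big1 // => x Px; case: eqP => // ex; rewrite ex Px in Pa.
Qed.

Lemma mgu_p_nil F S B : @mgu_p F S [::] B <-> S B.
Proof.
split.
  case=> n [l [E [[n0 Sl _ Hc] ->]]].
  have u : forall k : 'I_n, k = Ordinal n0.
    move=> k; have := Hc k (Ordinal n0); elim=> [x y [[? //]] | // | x y z _ -> _ -> //].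
  suff -> : res l = l (Ordinal n0) by [].
  apply: functional_extensionality => v; rewrite /res (bigD1 (Ordinal n0)) //= big1 ?addn0 //.
  by move=> k; rewrite (u k) eqxx.
move=> SB; exists 1, (fun _ => B), (fun i => [::]); split.
  split=> //; first by case.
  by move=> a b; rewrite (ord1 a) (ord1 b); apply: rt_refl.
by apply: functional_extensionality => v; rewrite /res big_ord1.
Qed.

Lemma dirA F S (b : nat * term F) th (T : finType) (l : T -> osg)
   (E : 'I_(size (b :: th)) -> seq (T * T)) :
  sgf S (b :: th) l E -> mgu_p (mgu_p S [:: b]) th (fun v => \sum_(k : T) l k v).
Proof.
move=> [n0 Sl Hd Hc].
pose E0 := E ord0.
pose e0 : rel T := fun x y => ((x, y) \in E0) || ((y, x) \in E0).
have sym : connect_sym e0 by apply: sym_connect_sym => x y; rewrite /e0 orbC.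
pose rt := root e0.
pose Q := {x : T | rt x == x}.
pose qr (x : T) : Q := exist _ (rt x) (roots_root sym x).
have qrK : forall a : Q, qr (val a) = a.
  by move=> a; apply: val_inj => /=; apply/eqP; exact: (valP a).
have qrE : forall x y, e0 x y -> qr x = qr y.
  by move=> x y exy; apply: val_inj => /=; apply/eqP; rewrite /rt root_connect // connect1.
pose lq (r : Q) : osg := fun v => \sum_(x | qr x == r) l x v.
pose Eq (i : 'I_(size th)) := map (fun e => (qr e.1, qr e.2)) (E (lift ord0 i)).
apply/mgu_p_fin; exists Q, lq, Eq; split; last first.
  by apply: functional_extensionality => v; rewrite (partition_big qr xpredT).
split.
- by case/card_gt0P: n0 => x _; apply/card_gt0P; exists (qr x).
- move=> r.
  pose A : {pred T} := [pred x | qr x == r].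
  pose C := {x in A}.
  pose g (e : T * T) : option (C * C) :=
    if insub e.1 is Some a then (if insub e.2 is Some a' then Some (a, a') else None)
    else None.
  apply/mgu_p_fin; exists C, (fun c => l (val c)), (fun _ => pmap g E0); split; last first.
    apply: functional_extensionality => v; rewrite /lq.
    by rewrite -(big_sub A (fun x => l x v)).
  split.
  + have Ar : val r \in A by rewrite inE qrK.
    by apply/card_gt0P; exists (Sub (val r) Ar).
  + by move=> c; apply: Sl.
  + move=> i c.
    have bv : bvar [:: b] i = bvar (b :: th) (@ord0 (size th)) by case: (i) => [[|m] Hm].
    have bt : bterm [:: b] i = bterm (b :: th) (@ord0 (size th)) by case: (i) => [[|m] Hm].
    rewrite bv bt count_pmap count_pmap; have [H1 H2] := Hd ord0 (val c).
    rewrite -H1 -H2 /E0.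
    have hc : val c \in A := valP c.
    split; apply: eq_in_count => e He.
    * have same : qr e.1 = qr e.2 by apply: qrE; rewrite /e0 -surjective_pairing He.
      rewrite /g; case: (insubP C e.1) => [a Aa va|nA]; case: (insubP C e.2) => [a' Aa' va'|nA'] /=.
      -- by rewrite -va val_eqE.
      -- by move: nA' Aa; rewrite !inE same => /negPf ->.
      -- apply/esym/negbTE; apply: contra nA => /eqP ->; exact: hc.
      -- apply/esym/negbTE; apply: contra nA => /eqP ->; exact: hc.
    * have same : qr e.1 = qr e.2 by apply: qrE; rewrite /e0 -surjective_pairing He.
      rewrite /g; case: (insubP C e.1) => [a Aa va|nA]; case: (insubP C e.2) => [a' Aa' va'|nA'] /=.
      -- by rewrite -va' val_eqE.
      -- apply/esym/negbTE; apply: contra nA' => /eqP ->; exact: hc.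
      -- by move: nA Aa'; rewrite !inE same => /negPf ->.
      -- apply/esym/negbTE; apply: contra nA' => /eqP ->; exact: hc.
  + move=> a b'.
    have ha : val a \in A := valP a.
    have hb : val b' \in A := valP b'.
    have : connect e0 (val a) (val b').
      rewrite -root_connect //; apply/eqP.
      move: ha hb; rewrite !inE => /eqP ha /eqP hb.
      by have := congr1 val (etrans ha (esym hb)).
    case/connectP => p; elim: p a {ha} => [|y p IH] a /=.
      move=> _ eb; have -> : a = b' by apply: val_inj; exact: (esym eb).
      apply: rt_refl.
    move=> /andP[e1 ep] lst.
    have Ay : y \in A by rewrite inE -(qrE _ _ e1); exact: (valP a).
    apply: (@rt_trans _ _ _ (Sub y Ay)); last exact: IH.
    apply: rt_step; exists ord0.
    have g1 : g (val a, y) = Some (a, Sub y Ay) by rewrite /g /= valK insubT.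
    have g2 : g (y, val a) = Some (Sub y Ay, a) by rewrite /g /= valK insubT.
    rewrite !mem_pmap -g1 -g2.
    by case/orP: e1 => H; rewrite (map_f g H) ?orbT.
- move=> i r; rewrite /Eq !count_map.
  rewrite (@count_part _ _ (fun e : T * T => e.1) (fun x => qr x == r)).
  rewrite (@count_part _ _ (fun e : T * T => e.2) (fun x => qr x == r)).
  rewrite /lq !chi_sum; split; apply: eq_bigr => x _; have [H1 H2] := Hd (lift ord0 i) x.
    by rewrite H1 /bvar lift0.
  by rewrite H2 /bterm lift0.
- move=> a b'; rewrite -(qrK a) -(qrK b'); apply: crt_map (Hc _ _).
  move=> x y [i Hi]; case: (unliftP ord0 i) Hi => [j ->|->] Hi.
    apply: rt_step; exists j.
    by case/orP: Hi => H; rewrite (map_f (fun e => (qr e.1, qr e.2)) H) ?orbT.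
  by rewrite (qrE x y Hi); apply: rt_refl.
Qed.

Lemma perm_lift (A B : eqType) (f : A -> B) (s : seq B) (s' : seq A) :
  perm_eq (map f s') s -> exists t, perm_eq t s' /\ map f t = s.
Proof.
elim: s s' => [|a s IH] s' H.
  exists [::]; case: s' H => [|x s'] H //; by have := perm_size H.
have : a \in map f s' by rewrite (perm_mem H) mem_head.
case/mapP => x xs ex; subst a.
have H' : perm_eq (map f (rem x s')) s.
  rewrite -(perm_cons (f x)); apply: (@perm_trans _ (map f s')) => //.
  by rewrite perm_sym -map_cons; apply: perm_map; apply: perm_to_rem.
have [t [Pt Mt]] := IH _ H'; exists (x :: t); split; last by rewrite /= Mt.
apply: (@perm_trans _ (x :: rem x s')); first by rewrite perm_cons.
by rewrite perm_sym; apply: perm_to_rem.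
Qed.

Lemma count_flat (V : finType) (d : V -> nat) (p : pred V) :
  count p (flatten [seq nseq (d y) y | y <- enum V]) = \sum_(y | p y) d y.
Proof.
rewrite count_flatten -map_comp sumnE big_map big_enum /= [RHS]big_mkcond.
by apply: eq_bigr => y _; rewrite /= count_nseq; case: (p y); rewrite ?mul1n ?mul0n.
Qed.

Lemma sumn_one (U : finType) (g : U -> nat) u :
  (forall u', u' != u -> g u' = 0) -> sumn [seq g u' | u' <- enum U] = g u.
Proof.
move=> H; rewrite sumnE big_map big_enum /= (bigD1 u) //= big1 ?addn0 // => u' /H //.
Qed.

Lemma zip_map2 (A B C D : Type) (f : A -> C) (g : B -> D) s t :
  zip (map f s) (map g t) = map (fun p => (f p.1, g p.2)) (zip s t).
Proof. by elim: s t => [|x s IH] [|y t] //=; rewrite IH. Qed.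

Definition cid := constructive_indefinite_description.
Arguments cid [A P] _.

Lemma dirB F S (b : nat * term F) th B :
  mgu_p (mgu_p S [:: b]) th B -> mgu_p S (b :: th) B.
Proof.
case/mgu_p_fin => U [L [EH [[u0 SL Hd Hc] ->]]].
have X : forall u, {n : nat & {l : 'I_n -> osg &
   {E : 'I_(size [:: b]) -> seq ('I_n * 'I_n) |
      @sharing_graph F S [:: b] n l E /\ L u = res l}}}.
  move=> u; case: (cid (SL u)) => n /cid [l /cid [E H]]; exists n, l, E; exact: H.
pose nn u := projT1 (X u).
pose ll u : 'I_(nn u) -> osg := projT1 (projT2 (X u)).
pose EE u : 'I_(size [:: b]) -> seq ('I_(nn u) * 'I_(nn u)) :=
  proj1_sig (projT2 (projT2 (X u))).
have HX : forall u, @sharing_graph F S [:: b] (nn u) (ll u) (EE u) /\ L u = res (ll u).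
  move=> u; exact: (proj2_sig (projT2 (projT2 (X u)))).
clearbody nn ll EE; clear X.
pose V : finType := {u : U & 'I_(nn u)}.
pose lb (y : V) := ll (tag y) (tagged y).
have tagsum : forall (d : V -> nat) u,
    \sum_(y | tag y == u) d y = \sum_(k < nn u) d (Tagged (fun u => 'I_(nn u)) k).
  move=> d u.
  have h : \sum_(u' | u' == u) \sum_(k < nn u') d (Tagged (fun u => 'I_(nn u)) k)
         = \sum_(k < nn u) d (Tagged (fun u => 'I_(nn u)) k) by rewrite big_pred1_eq.
  rewrite -h.
  rewrite (sig_big_dep (fun u' => u' == u) (fun _ => xpredT)
              (fun u' k => d (Tagged (fun u => 'I_(nn u)) k))).
  by apply: eq_big => [[u' k]|[u' k] _] //=; rewrite andbT.
have Y : forall j : 'I_(size th), sig (fun Ej : seq (V * V) =>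
    (forall y, count (fun e => e.1 == y) Ej = chi (lb y) (Var (bvar th j) : term F) /\
               count (fun e => e.2 == y) Ej = chi (lb y) (bterm th j)) /\
    map (fun e => (tag e.1, tag e.2)) Ej = EH j).
  move=> j; apply: cid.
  have key : forall (t : term F) (pr : U * U -> U),
     (forall u, count (fun e => pr e == u) (EH j) = chi (L u) t) ->
     exists s, (forall y, count (pred1 y) s = chi (lb y) t) /\ map tag s = map pr (EH j).
    move=> t pr Hpr.
    pose Bo := flatten [seq nseq (chi (lb y) t) y | y <- enum V].
    have P : perm_eq (map tag Bo) (map pr (EH j)).
      apply/allP => u _; apply/eqP; rewrite !count_map.
      rewrite (@count_flat V (fun y => chi (lb y) t) (preim tag (pred1 u))).
      rewrite (eq_count (a2 := fun e => pr e == u)) // Hpr (proj2 (HX u)) /res chi_sum.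
      by rewrite (tagsum (fun y => chi (lb y) t)).
    have [s [Ps Ms]] := perm_lift P; exists s; split => // y.
    by rewrite (permP Ps) count_flat big_pred1_eq.
  have [so [So Mo]] := key (Var (bvar th j)) fst (fun u => proj1 (Hd j u)).
  have [si [Si Mi]] := key (bterm th j) snd (fun u => proj2 (Hd j u)).
  have sz : size so = size si by rewrite -(size_map tag so) Mo -(size_map tag si) Mi !size_map.
  exists (zip so si); split; last by rewrite -zip_map2 Mo Mi zip_unzip.
  move=> y; split.
    transitivity (count (pred1 y) (unzip1 (zip so si))); first by rewrite count_map.
    by rewrite unzip1_zip ?sz // So.
  transitivity (count (pred1 y) (unzip2 (zip so si))); first by rewrite count_map.
  by rewrite unzip2_zip ?sz // Si.
pose tg u (k : 'I_(nn u)) : V := @Tagged U u (fun u => 'I_(nn u)) k.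
pose E0 : seq (V * V) :=
  flatten (map (fun u => map (fun e => (tg u e.1, tg u e.2)) (EE u ord0)) (enum U)).
pose Eb (i : 'I_(size (b :: th))) : seq (V * V) :=
  if unlift ord0 i is Some j then proj1_sig (Y j) else E0.
apply/mgu_p_fin; exists V, lb, Eb; split; last first.
  apply: functional_extensionality => v.
  rewrite (eq_bigr (fun u => \sum_(k < nn u) ll u k v)); last by move=> u _; rewrite (proj2 (HX u)).
  rewrite (sig_big_dep xpredT (fun _ => xpredT) (fun u k => ll u k v)).
  by apply: eq_bigl.
split.
- case/card_gt0P: u0 => u _; case: (HX u) => [[n0 _ _ _] _].
  by apply/card_gt0P; exists (tg u (Ordinal n0)).
- by move=> y; case: (HX (tag y)) => [[_ Sy _ _] _]; exact: Sy.
- move=> i y; case: (unliftP ord0 i) => [j ->|->].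
    rewrite /Eb liftK; have [H _] := proj2_sig (Y j).
    rewrite /bvar /bterm lift0; exact: H y.
  rewrite /Eb unlift_none; case: y => u k.
  have [[_ _ Hg _] _] := HX u; have [G1 G2] := Hg ord0 k.
  rewrite !count_flatten -!map_comp -enumT !(sumn_one (u:=u)) /=.
  + rewrite !count_map; split.
      by rewrite (eq_count (a2 := fun e => e.1 == k)) ?G1 // => e /=; rewrite eq_Tagged.
    by rewrite (eq_count (a2 := fun e => e.2 == k)) ?G2 // => e /=; rewrite eq_Tagged.
  + move=> u' Hu /=; rewrite count_map (eq_count (a2 := pred0)) ?count_pred0 // => e /=.
    by apply/negbTE; apply: contra Hu => /eqP/(congr1 tag) /= ->.
  + move=> u' Hu /=; rewrite count_map (eq_count (a2 := pred0)) ?count_pred0 // => e /=.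
    by apply/negbTE; apply: contra Hu => /eqP/(congr1 tag) /= ->.
- pose R := fun x y : V => exists i : 'I_(size (b :: th)), ((x, y) \in Eb i) || ((y, x) \in Eb i).
  have inner : forall u (k1 k2 : 'I_(nn u)), clos_refl_trans V R (tg u k1) (tg u k2).
    move=> u k1 k2; case: (HX u) => [[_ _ _ Hg] _].
    apply: (crt_map (f := tg u) _ (Hg k1 k2)) => x y [i Hi]; apply: rt_step; exists ord0.
    have ei : i = ord0 by apply/val_inj; case: (i) => [[|m] Hm].
    rewrite /Eb unlift_none; subst i.
    have mE : forall e, e \in EE u ord0 -> (tg u e.1, tg u e.2) \in E0.
      move=> e He; apply/flattenP; exists (map (fun e => (tg u e.1, tg u e.2)) (EE u ord0)).
        by apply: (map_f (fun u => map (fun e => (tg u e.1, tg u e.2)) (EE u ord0))); rewrite mem_enum.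
      exact: (map_f (fun e => (tg u e.1, tg u e.2))).
    by case/orP: Hi => H; rewrite (mE _ H) ?orbT.
  have same : forall y1 y2 : V, tag y1 = tag y2 -> clos_refl_trans V R y1 y2.
    by move=> [u1 k1] [u2 k2] /= e; subst u2; apply: inner.
  suff G : forall u1 u2, clos_refl_trans U
       (fun x y : U => exists i : 'I_(size th), ((x, y) \in EH i) || ((y, x) \in EH i)) u1 u2 ->
     forall y1 y2 : V, tag y1 = u1 -> tag y2 = u2 -> clos_refl_trans V R y1 y2.
    by move=> y1 y2; apply: (G _ _ (Hc (tag y1) (tag y2))).
  move=> u1 u2; elim=> [x y [j Hj] | x | x y z _ IH1 _ IH2] y1 y2 e1 e2.
  + have [_ Mj] := proj2_sig (Y j).
    case/orP: Hj => Hj; rewrite -Mj in Hj; case/mapP: Hj => [[z1 z2] Hz [ez1 ez2]].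
      apply: (@rt_trans _ _ _ z1); first by apply: same; rewrite e1.
      apply: (@rt_trans _ _ _ z2); last by apply: same; rewrite e2.
      by apply: rt_step; exists (lift ord0 j); rewrite /Eb liftK Hz.
    apply: (@rt_trans _ _ _ z2); first by apply: same; rewrite e1.
    apply: (@rt_trans _ _ _ z1); last by apply: same; rewrite e2.
    by apply: rt_step; exists (lift ord0 j); rewrite /Eb liftK Hz orbT.
  + by apply: same; rewrite e1 e2.
  + case: (HX y) => [[n0 _ _ _] _].
    apply: (@rt_trans _ _ _ (tg y (Ordinal n0))); [exact: IH1 | exact: IH2].
Qed.

Theorem theorem1 (F : Type) (ar : F -> nat) (S : osg -> Prop) (th : subst F) :
  (forall B, S B -> fin_supp B) ->
  all (fun b => wf_term ar b.2) th ->
  idempotent_subst th ->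
  forall B : osg, mgu_omega S th B <-> mgu_p S th B.
Proof.
move=> _ _ _; elim: th S => [|b th IH] S B /=.
  by rewrite mgu_p_nil.
rewrite IH; split; first exact: dirB.
case/mgu_p_fin => T [l [E [H ->]]]; exact: dirA H.
Qed.
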